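(* Suppose $V$ is time-invariant, i.e. $V\circ T=T\circ V$. Let $C\in(0,\infty)$, $\kappa\in(0,2^{1-p}|\mathbf{w}|^{-1})$ and $\Xi\in\mathcal{M}_p^{C,\kappa}(\underline{\mathcal{U}})$, and let $\mu^{\Xi}$ be the unique fixed point of $\mathcal{F}_*$ in $P^{\Xi}(\underline{\mathcal{X}}\times\underline{\mathcal{U}})\cap P^{V\text{-}\mathrm{causal}}(\underline{\mathcal{X}}\times\underline{\mathcal{U}})\cap P_p^{\mathbf{w}}(\underline{\mathcal{X}}\times\underline{\mathcal{U}})$. If $\Xi$ is stationary, i.e. $T_*\Xi=\Xi$, then $\mu^{\Xi}$ is stationary, i.e. $(T\times T)_*\mu^{\Xi}=\mu^{\Xi}$.
   Context: General conventions: $p\in[1,\infty)$ fixed; $\mathbb{Z}_-=\{\dots,-2,-1\}$; $\mathbb{N}=\{1,2,\dots\}$. Topological spaces carry Borel $\sigma$-algebras; products carry product topologies, products of metric spaces are metrized by the sum of the metrics. $P(\mathcal{Y})$: Borel probability measures; $P_p(\mathcal{Y})$: those with finite $p$-th moment. $\pi$: coordinate projections; $P^{\Xi}(\mathcal{Y}_1\times\mathcal{Y}_2)=\{\mu:(\pi_{\mathcal{Y}_2})_*\mu=\Xi\}$. $T$ denotes the time shift $T(\mathbf{y})_t=y_{t-1}$ on any sequence space $\mathcal{Y}^{\mathbb{Z}_-}$. Setting: $\mathcal{Z},\mathcal{U}$ Polish; $(\mathcal{X},d_{\mathcal{X}})$ Polish with complete metric; $f:\mathcal{X}\times\mathcal{U}\to\mathcal{X}$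 continuous. $\underline{\mathcal{Z}}=\mathcal{Z}^{\mathbb{Z}_-}$; $V:\underline{\mathcal{Z}}\to\mathcal{U}^{\mathbb{Z}_-}$ continuous and causal (if $z_s=z'_s$ for all $s\le t$ then $V(\mathbf{z})_t=V(\mathbf{z}')_t$); $\underline{\mathcal{U}}=V(\underline{\mathcal{Z}})$ Polish with a metric $d_{\underline{\mathcal{U}}}$ inducing its topology. $\mathbf{w}=(w_t)_{t\le-1}\subseteq(0,1)$ monotone, summing to $1$, $|\mathbf{w}|:=\sup_{n\in\mathbb{N}}(\sup_tw_t/w_{t-n})^{1/n}<\infty$. Fix $x_*\in\mathcal{X}$. $\underline{\mathcal{X}}=\{\mathbf{x}\in\mathcal{X}^{\mathbb{Z}_-}:\sum_tw_td_{\mathcal{X}}(x_t,x_* )<\infty\}$ with metric $d_{\underline{\mathcal{X}}}(\mathbf{x}^1,\mathbf{x}^2)=\sum_tw_td_{\mathcal{X}}(x^1_t,x^2_t)$. $F(\mathbf{x},\mathbf{u})_t=f(x_{t-1},u_t)$; standing assumption: $F$ maps $\underline{\mathcal{X}}\times\underline{\mathcal{U}}$ into $\underline{\mathcal{X}}$ continuously. $\mathcal{F}(\mathbf{x},\mathbf{u})=(F(\mathbf{x},\mathbf{u}),\mathbf{u})$. Definitions: $\Theta\in P(\underline{\mathcal{Z}})$ has $\kappa$-contractive marginals if for $\mathbf{Z}\sim\Theta$, a.s. for all $x_1,x_2\in\mathcal{X}$, $t\le-1$: $\mathbb{E}[d_{\mathcal{X}}(f(x_1,V(\mathbf{Z})_t),f(x_2,V(\mathbf{Z})_t))^p\mid(Z_s)_{s\le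 t-1}]\le\kappa d_{\mathcal{X}}(x_1,x_2)^p$. $\Xi$ is $C$-bounded if $\sum_tw_t\mathbb{E}_{\mathbf{U}\sim\Xi}[d_{\mathcal{X}}(f(x_*,U_t),x_* )^p]\le C$. $\mathcal{M}_p^{C,\kappa}(\underline{\mathcal{U}})$: $C$-bounded $\Xi\in P_p(\underline{\mathcal{U}})$ with $\Xi=V_*\Theta$ for some $\Theta$ with independent coordinates and $\kappa$-contractive marginals. $P^{V\text{-}\mathrm{causal}}(\underline{\mathcal{X}}\times\underline{\mathcal{U}})$: laws of $(\mathbf{X},V(\mathbf{Z}))$ with $\mathbf{X}$ $\underline{\mathcal{X}}$-valued, $\mathbf{Z}$ $\underline{\mathcal{Z}}$-valued with independent coordinates, and $(X_s,Z_s)_{s\le t}$ independent of $(Z_{t+1},\dots,Z_{-1})$ for all $t\le-2$. $P_p^{\mathbf{w}}(\underline{\mathcal{X}}\times\underline{\mathcal{U}})=\{\mu\in P_p(\underline{\mathcal{X}}\times\underline{\mathcal{U}}):\sum_tw_t\mathbb{E}_{\mathbf{X}\sim(\pi_{\underline{\mathcal{X}}})_*\mu}[d_{\mathcal{X}}(X_t,x_* )^p]<\infty\}$. (It is known that under these hypotheses such a unique fixed point $\mu^{\Xi}$ exists.) *)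

(* Defs.v *)
From HB Require Import structures.
From mathcomp Require Import all_boot all_order all_algebra.
From mathcomp Require Import all_classical all_reals all_analysis.
From mathcomp Require Import measurable_realfun lebesgue_integral probability.
Set Implicit Arguments.
Unset Strict Implicit.
Unset Printing Implicit Defensive.
Import Order.TTheory GRing.Theory Num.Theory.
Import numFieldNormedType.Exports.
Local Open Scope classical_set_scope.
Local Open Scope ring_scope.

Section generic.
Context (R : realType).

Definition is_metric {T : Type} (d : T -> T -> R) :=
  forall x y z, 0 <= d x y /\ (d x y = 0 <-> x = y) /\ d x y = d y x /\
                d x z <= d x y + d y z.

Definition metric_open {T : Type} (d : T -> T -> R) (A : set T) :=
  forall x, A x -> exists2 e, 0 < e & [set y | d x y < e] `<=` A.

Definition metric_complete {T : Type} (d : T -> T -> R) :=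
  forall u : nat -> T,
    (forall e, 0 < e -> exists N, forall m n, (N <= m)%N -> (N <= n)%N -> d (u m) (u n) < e) ->
    exists l, forall e, 0 < e -> exists N, forall n, (N <= n)%N -> d (u n) l < e.

Definition metric_separable {T : Type} (d : T -> T -> R) :=
  exists D : set T, countable D /\ forall x e, 0 < e -> exists2 y, D y & d x y < e.

Definition polish_space (T : topologicalType) :=
  exists d : T -> T -> R, [/\ is_metric d, (forall A : set T, open A <-> metric_open d A),
                             metric_complete d & metric_separable d].

Definition induces_subspace_topology (T : topologicalType) (S : set T)
  (d : {x : T | S x} -> {x : T | S x} -> R) :=
  is_metric d /\ forall A : set {x : T | S x},
    metric_open d A <-> exists2 O : set T, open O & A = [set x | O (sval x)].

Definition polish_subspace (T : topologicalType) (S : set T) :=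
  exists d, [/\ @induces_subspace_topology T S d, metric_complete d & metric_separable d].

End generic.

(** Sequences indexed by Z_- = {..., -2, -1} are encoded as functions on nat:
    index n : nat stands for time t = -(n+1). *)

Section weights.
Context (R : realType).
Local Open Scope ereal_scope.

Definition weight_seq (w : nat -> R) :=
  [/\ (forall n, (0 < w n < 1)%R),
      ({homo w : m n / (m <= n)%N >-> (n <= m)%R} \/
       {homo w : m n / (m <= n)%N >-> (m <= n)%R}) &
      \sum_(0 <= k <oo) (w k)%:E = 1].

Definition wratio_sup (w : nat -> R) (n : nat) : \bar R :=
  ereal_sup (range (fun m => (w m / w (m + n)%N)%:E)).

(** |w| = sup_{n >= 1} (sup_t w_t / w_{t-n})^(1/n)  (value +oo if some inner sup is +oo) *)
Definition wnorm (w : nat -> R) : \bar R :=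
  ereal_sup [set (match wratio_sup w n with
                  | EFin r => (r `^ (n%:R)^-1)%:E
                  | _ => +oo end) | n in [set n : nat | (0 < n)%N]].

Definition wsum (w : nat -> R) (g : nat -> R) : \bar R :=
  \sum_(0 <= k <oo) (w k * g k)%:E.

End weights.

(** time shift T(y)_t = y_{t-1} *)
Definition shift {A : Type} (y : nat -> A) : nat -> A := fun n => y n.+1.

Definition inXund {R : realType} {X : metricType R} (w : nat -> R) (xs : X)
  (x : nat -> X) := (wsum w (fun k => mdist (x k) xs) < +oo)%E.

Definition Xund {R : realType} {X : metricType R} (w : nat -> R) (xs : X) :=
  {x : nat -> X | inXund w xs x}.

Lemma inXund_cst {R : realType} {X : metricType R} (w : nat -> R) (xs : X) :
  inXund w xs (fun _ => xs).
Proof.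
rewrite /inXund /wsum.
under eq_eseriesr do rewrite mdistxx mulr0.
by rewrite eseries0 ?ltry.
Qed.

HB.instance Definition _ (R : realType) (X : metricType R) (w : nat -> R) (xs : X) :=
  gen_eqMixin (@Xund R X w xs).
HB.instance Definition _ (R : realType) (X : metricType R) (w : nat -> R) (xs : X) :=
  gen_choiceMixin (@Xund R X w xs).
HB.instance Definition _ (R : realType) (X : metricType R) (w : nat -> R) (xs : X) :=
  isPointed.Build (@Xund R X w xs) (exist _ (fun _ => xs) (inXund_cst w xs)).

Definition Uund {Z : ptopologicalType} {U : topologicalType}
  (V : {ptws nat -> Z} -> {ptws nat -> U}) := {u : {ptws nat -> U} | range V u}.

Lemma inUund {Z : ptopologicalType} {U : topologicalType}
  (V : {ptws nat -> Z} -> {ptws nat -> U}) (z : {ptws nat -> Z}) : range V (V z).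
Proof. by exists z. Qed.

Definition Vund {Z : ptopologicalType} {U : topologicalType}
  (V : {ptws nat -> Z} -> {ptws nat -> U}) (z : {ptws nat -> Z}) : Uund V :=
  exist _ (V z) (inUund V z).

HB.instance Definition _ (Z : ptopologicalType) (U : topologicalType)
  (V : {ptws nat -> Z} -> {ptws nat -> U}) := gen_eqMixin (@Uund Z U V).
HB.instance Definition _ (Z : ptopologicalType) (U : topologicalType)
  (V : {ptws nat -> Z} -> {ptws nat -> U}) := gen_choiceMixin (@Uund Z U V).
HB.instance Definition _ (Z : ptopologicalType) (U : topologicalType)
  (V : {ptws nat -> Z} -> {ptws nat -> U}) :=
  isPointed.Build (@Uund Z U V) (Vund V point).

Definition metric_borel {R : realType} {T : pointedType} (d : T -> T -> R) :=
  g_sigma_algebraType (metric_open d).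
Definition topo_borel (T : ptopologicalType) := g_sigma_algebraType (@open T).
Definition borel_sets (T : topologicalType) : set (set T) := <<s @open T >>.

Section probability_notions.
Context {R : realType} {dO : measure_display} {O : measurableType dO}.
Local Open Scope ereal_scope.

Definition sigma_of {T : Type} (Y : O -> T) (M : set (set T)) : set (set O) :=
  [set Y @^-1` B | B in M].

Definition indep_family (P : probability O R) (G : nat -> set (set O)) :=
  forall (s : seq nat) (E : nat -> set O), uniq s ->
    (forall i, i \in s -> G i (E i)) ->
    P (\big[setI/setT]_(i <- s) E i) = \big[*%E/1%E]_(i <- s) P (E i).

Definition indep2 (P : probability O R) (G1 G2 : set (set O)) :=
  forall A B, G1 A -> G2 B -> P (A `&` B) = P A * P B.

Definition cond_exp_version (P : probability O R) (G : set (set O)) (g h : O -> \bar R) :=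
  (forall B : set (\bar R), measurable B -> G (h @^-1` B)) /\
  (forall A, G A -> \int[P]_(x in A) h x = \int[P]_(x in A) g x).

End probability_notions.

Section setting.
Context {R : realType} {Z : ptopologicalType} {U : topologicalType} {X : metricType R}.
Variables (V : {ptws nat -> Z} -> {ptws nat -> U}) (dU : Uund V -> Uund V -> R)
  (w : nat -> R) (xs : X) (f : X * U -> X) (p : R).
Local Open Scope ereal_scope.

Definition causal_map :=
  forall (z z' : {ptws nat -> Z}) (n : nat),
    (forall m, (n <= m)%N -> z m = z' m) -> V z n = V z' n.
Definition time_invariant := forall z : {ptws nat -> Z}, V (shift z) = shift (V z).

Definition dXseq (x1 x2 : nat -> X) : R := fine (wsum w (fun k => mdist (x1 k) (x2 k))).
Definition dXund (x1 x2 : Xund w xs) : R := dXseq (sval x1) (sval x2).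

Definition XU := (Xund w xs * Uund V)%type.
Definition dXU (a b : XU) : R := (dXund a.1 b.1 + dU a.2 b.2)%R.

Definition ZB := g_sigma_algebraType (@open {ptws nat -> Z}).
Definition UB := metric_borel dU.
Definition XB := metric_borel dXund.
Definition XUB := metric_borel dXU.

(** F(x,u)_t = f(x_{t-1}, u_t) *)
Definition Fmap (x : nat -> X) (u : nat -> U) : nat -> X := fun n => f (x n.+1, u n).

Definition F_standing :=
  (forall a : XU, inXund w xs (Fmap (sval a.1) (sval a.2))) /\
  (forall (a : XU) (e : R), (0 < e)%R -> exists2 delta : R, (0 < delta)%R &
     forall b : XU, (dXU a b < delta)%R ->
       (dXseq (Fmap (sval a.1) (sval a.2)) (Fmap (sval b.1) (sval b.2)) < e)%R).

(** (calF)_* mu = mu, with calF(x,u) = (F(x,u), u) *)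
Definition Fcal_fixed (mu : probability XUB R) :=
  forall A : set XUB, measurable A ->
    mu [set a : XUB | exists2 b : XUB, A b &
          sval b.1 = Fmap (sval a.1) (sval a.2) /\ b.2 = a.2] = mu A.

Definition stationary_U (Xi : probability UB R) :=
  forall B : set UB, measurable B ->
    Xi [set u : UB | exists2 b : UB, B b & sval b = shift (sval u)] = Xi B.
Definition stationary_XU (mu : probability XUB R) :=
  forall A : set XUB, measurable A ->
    mu [set a : XUB | exists2 b : XUB, A b &
          sval b.1 = shift (sval a.1) /\ sval b.2 = shift (sval a.2)] = mu A.

Definition marginal_is (Xi : probability UB R) (mu : probability XUB R) :=
  forall B : set UB, measurable B -> mu [set a : XUB | B a.2] = Xi B.

Definition in_Ppw (mu : probability XUB R) :=
  (exists a0 : XUB, \int[mu]_a ((dXU a a0) `^ p)%:E < +oo) /\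
  \sum_(0 <= k <oo) ((w k)%:E * \int[mu]_a ((mdist (sval a.1 k) xs) `^ p)%:E) < +oo.

Definition V_causal (mu : probability XUB R) :=
  exists (dO : measure_display) (O : measurableType dO) (P : probability O R)
         (Xr : O -> Xund w xs) (Zr : O -> {ptws nat -> Z}),
  [/\ measurable_fun [set: O] (Xr : O -> XB),
      measurable_fun [set: O] (Zr : O -> ZB),
      indep_family P (fun n => sigma_of (fun o => Zr o n) (@borel_sets Z)),
      (forall n : nat, (0 < n)%N ->
         indep2 P
           <<s \bigcup_(m in [set m : nat | (n <= m)%N])
                 (sigma_of (fun o => sval (Xr o) m) (@borel_sets X) `|`
                  sigma_of (fun o => Zr o m) (@borel_sets Z)) >>
           <<s \bigcup_(m in [set m : nat | (m < n)%N])
                 sigma_of (fun o => Zr o m) (@borel_sets Z) >>) &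
      (forall A : set XUB, measurable A ->
         pushforward P (fun o => ((Xr o, Vund V (Zr o)) : XUB)) A = mu A)].

Definition in_S (Xi : probability UB R) (mu : probability XUB R) :=
  [/\ marginal_is Xi mu, V_causal mu & in_Ppw mu].

(** sigma((Z_s)_{s <= t-1}) on the canonical space, for t = -(n+1) *)
Definition past_sigma (n : nat) : set (set ZB) :=
  <<s \bigcup_(m in [set m : nat | (n < m)%N])
        sigma_of (fun z : ZB => z m) (@borel_sets Z) >>.

Definition kappa_contractive (kappa : R) (Theta : probability ZB R) :=
  exists h : X -> X -> nat -> ZB -> \bar R,
    (forall x1 x2 n, cond_exp_version Theta (past_sigma n)
        (fun z => ((mdist (f (x1, V z n)) (f (x2, V z n))) `^ p)%:E) (h x1 x2 n)) /\
    {ae Theta, forall z, forall x1 x2 n,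
        h x1 x2 n z <= (kappa * (mdist x1 x2) `^ p)%:E}.

Definition C_bounded (C : R) (Xi : probability UB R) :=
  \sum_(0 <= k <oo) ((w k)%:E * \int[Xi]_u ((mdist (f (xs, sval u k)) xs) `^ p)%:E)
    <= C%:E.

Definition in_M (C kappa : R) (Xi : probability UB R) :=
  [/\ C_bounded C Xi,
      (exists u0 : UB, \int[Xi]_u ((dU u u0) `^ p)%:E < +oo) &
      exists Theta : probability ZB R,
        [/\ indep_family Theta (fun n => sigma_of (fun z : ZB => z n) (@borel_sets Z)),
            kappa_contractive kappa Theta &
            forall B : set UB, measurable B ->
              Xi B = pushforward Theta (Vund V : ZB -> UB) B]].

End setting.

(* Main.v *)
Require Import Defs.
From HB Require Import structures.
From mathcomp Require Import all_boot all_order all_algebra.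
From mathcomp Require Import all_classical all_reals all_analysis.
From mathcomp Require Import measurable_realfun lebesgue_integral probability.
From mathcomp Require Import lra.
Import Order.TTheory GRing.Theory Num.Theory.
Import numFieldNormedType.Exports.
Import Defs.
Local Open Scope classical_set_scope.
Local Open Scope ring_scope.
Lemma wshift_bound (R : realType) (w : nat -> R) :
  weight_seq w -> (wnorm w < +oo)%E ->
  exists c : R, 0 < c /\ forall k, w k <= c * w k.+1.
Proof.
move=> [w01 _ _] wfin.
have ub m : ((w m / w (m + 1)%N)%:E <= wratio_sup w 1)%E.
  by apply: ereal_sup_ubound; exists m.
have hn : ((match wratio_sup w 1 with
           | EFin r => (r `^ (1%:R)^-1)%:E | _ => +oo end) <= wnorm w)%E.
  by apply: ereal_sup_ubound; exists 1%N.
have wpos k : 0 < w k by case/andP: (w01 k).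
move: hn; case E: (wratio_sup w 1) => [r| |] // hn.
- have h0 := ub 0%N; rewrite E in h0.
  have r0 : 0 < r.
    by rewrite -lte_fin; apply: lt_le_trans h0; rewrite lte_fin divr_gt0.
  exists r; split => // k.
  by have := ub k; rewrite E addn1 lee_fin ler_pdivrMr.
- by move: (lt_le_trans wfin hn); rewrite ltxx.
- by have := ub 0%N; rewrite E leeNy_eq.
Qed.

Lemma pow_meas (R : realType) d (T : measurableType d) (g : T -> R) (p : R) :
  measurable_fun setT g -> measurable_fun setT (fun x => ((g x) `^ p)%:E).
Proof.
move=> mg; apply/measurable_EFinP.
exact: (measurableT_comp (measurable_powR p) mg).
Qed.

Lemma pow_add_le (R : realType) (x y p : R) : 0 <= x -> 0 <= y -> 0 <= p ->
  (x + y) `^ p <= 2 `^ p * (x `^ p + y `^ p).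
Proof.
move=> x0 y0 p0.
have m : x + y <= 2 * Num.max x y.
  by rewrite mulr2n mulrDl mul1r lerD // ?le_max ?lexx ?orbT.
apply: (@le_trans _ _ ((2 * Num.max x y) `^ p)).
  apply: ge0_ler_powR => //; rewrite nnegrE ?addr_ge0 ?mulr_ge0 // le_max x0 //.
rewrite powRM // ?le_max ?x0 //; apply: ler_wpM2l; first exact: powR_ge0.
case: (leP x y) => _.
- by rewrite lerDr powR_ge0.
- by rewrite lerDl powR_ge0.
Qed.
Lemma open_pres_meas (R : realType) (T1 T2 : pointedType)
  (d1 : T1 -> T1 -> R) (d2 : T2 -> T2 -> R) (g : T1 -> T2) :
  (forall B, metric_open d2 B -> metric_open d1 (g @^-1` B)) ->
  measurable_fun [set: metric_borel d1] (g : metric_borel d1 -> metric_borel d2).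
Proof.
move=> h.
have := @measurability _ _ (metric_borel d1) (metric_borel d2) setT g (metric_open d2).
move=> /(_ erefl); apply.
move=> _ [B oB <-]; rewrite setTI; apply: sub_sigma_algebra; exact: h.
Qed.

Lemma cont_open_pres (R : realType) (T1 T2 : Type)
  (d1 : T1 -> T1 -> R) (d2 : T2 -> T2 -> R) (g : T1 -> T2) :
  (forall a e, 0 < e -> exists2 del, 0 < del &
     forall b, d1 a b < del -> d2 (g a) (g b) < e) ->
  forall B, metric_open d2 B -> metric_open d1 (g @^-1` B).
Proof.
move=> gc B oB a /oB [e e0 eB]; have [del del0 H] := gc a e e0.
by exists del => // b /H; exact: eB.
Qed.

Lemma real_meas (R : realType) (T1 : pointedType) (d1 : T1 -> T1 -> R)
  (phi : T1 -> R) :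
  (forall a e, 0 < e -> exists2 del, 0 < del &
     forall b, d1 a b < del -> `|phi a - phi b| < e) ->
  measurable_fun [set: metric_borel d1] phi.
Proof.
move=> pc.
have oo r : metric_open d1 (phi @^-1` [set x | r < x]).
  move=> a /= ra.
  have := pc a (phi a - r); rewrite subr_gt0 => /(_ ra) [del del0 H].
  exists del => // b /H; rewrite ltr_norml => /andP[_ h] /=; lra.
have mo r : measurable (phi @^-1` [set x | r < x] : set (metric_borel d1)).
  by apply: sub_sigma_algebra.
have := @measurability _ _ (metric_borel d1) R setT phi (@ocitv R).
move=> /(_ erefl); apply.
move=> _ [_ [[a b] _ <-] <-]; rewrite setTI.
rewrite (_ : phi @^-1` `]a, b] =
   phi @^-1` [set x | a < x] `\` phi @^-1` [set x | b < x]).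
  exact: measurableD.
apply/seteqP; split => x /=; rewrite in_itv /=.
  by case/andP => ax xb; split => //; apply/negP; rewrite -leNgt.
by case=> ax /negP; rewrite -leNgt => ->; rewrite ax.
Qed.

Lemma Prop_irr_exist (T : Type) (P : T -> Prop) (x y : {t | P t}) :
  sval x = sval y -> x = y.
Proof.
case: x y => x px [y py] /= xy; subst y.
by rewrite (Prop_irrelevance px py).
Qed.

Section weights_facts.
Context {R : realType} (w : nat -> R) (c : R).
Hypotheses (c0 : 0 < c) (wc : forall k, w k <= c * w k.+1)
  (wpos : forall k, 0 < w k).
Local Open Scope ereal_scope.

Lemma eshift_le (a : nat -> \bar R) : (forall k, 0 <= a k) ->
  \sum_(0 <= k <oo) ((w k)%:E * a k.+1) <=
  c%:E * \sum_(0 <= k <oo) ((w k)%:E * a k).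
Proof.
move=> a0.
have wa0 k : 0 <= (w k)%:E * a k by rewrite mule_ge0 // lee_fin ltW.
apply: (@le_trans _ _ (\sum_(0 <= k <oo) (c%:E * ((w k.+1)%:E * a k.+1)))).
  apply: lee_nneseries => [i _ _|n _]; first by rewrite mule_ge0 // lee_fin ltW.
  by rewrite muleA -EFinM lee_wpmul2r // lee_fin.
rewrite nneseriesZl //; apply: lee_wpmul2l; first by rewrite lee_fin ltW.
have := @nneseries_addn R (fun i => (w i)%:E * a i) 1 wa0.
under eq_eseriesr do rewrite addn1.
move=> ->.
rewrite (@nneseries_split R _ 0 1) //.
by rewrite add0n leeDr // sume_ge0.
Qed.

End weights_facts.

Section xund.
Context {R : realType} {X : metricType R} (w : nat -> R) (xs : X) (c : R).
Hypotheses (c0 : 0 < c) (wc : forall k, w k <= c * w k.+1)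
  (wpos : forall k, 0 < w k).
Local Notation XX := (Xund w xs).

Lemma wsum_ge0 g : (forall k, 0 <= g k) -> (0 <= wsum w g)%E.
Proof. by move=> g0; apply: nneseries_ge0 => n _ _; rewrite lee_fin mulr_ge0 ?mdist_ge0 // ltW. Qed.

Lemma wsum_shift g : (forall k, 0 <= g k) ->
  (wsum w (fun k => g k.+1) <= c%:E * wsum w g)%E.
Proof.
move=> g0; rewrite /wsum; under eq_eseriesr do rewrite EFinM.
under [X in (_ <= _ * X)%E]eq_eseriesr do rewrite EFinM.
by apply: eshift_le => // k; rewrite lee_fin.
Qed.

Lemma wsum_fin (x y : XX) :
  (wsum w (fun k => mdist (sval x k) (sval y k)) < +oo)%E.
Proof.
have hx := svalP x; have hy := svalP y.
apply: (@le_lt_trans _ _ (wsum w (fun k => mdist (sval x k) xs) +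
   wsum w (fun k => mdist (sval y k) xs))%E); last exact: lte_add_pinfty.
rewrite /wsum -nneseriesD; last 2 first.
- by move=> i _ _; rewrite lee_fin mulr_ge0 ?mdist_ge0 // ltW.
- by move=> i _ _; rewrite lee_fin mulr_ge0 ?mdist_ge0 // ltW.
apply: lee_nneseries => [i _ _|n _]; first by rewrite lee_fin mulr_ge0 ?mdist_ge0 // ltW.
rewrite -EFinD lee_fin -mulrDr ler_pM2l //.
by rewrite (metric_sym (sval y n)); exact: metric_triangle.
Qed.

Lemma dXundE (x y : XX) :
  ((dXund x y)%:E = wsum w (fun k => mdist (sval x k) (sval y k)))%E.
Proof.
rewrite /dXund /dXseq fineK // ge0_fin_numE ?wsum_fin //.
by apply: wsum_ge0 => k; exact: mdist_ge0.
Qed.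

Lemma dXund_ge0 (x y : XX) : 0 <= dXund x y.
Proof. by rewrite -lee_fin dXundE; apply: wsum_ge0 => k; exact: mdist_ge0. Qed.

Lemma dXund_sym (x y : XX) : dXund x y = dXund y x.
Proof.
apply/EFin_inj; rewrite !dXundE /wsum.
by apply: eq_eseriesr => k _; rewrite metric_sym.
Qed.

Lemma dXund_tri (x y z : XX) : dXund x z <= dXund x y + dXund y z.
Proof.
rewrite -lee_fin EFinD !dXundE /wsum -nneseriesD; last 2 first.
- by move=> i _ _; rewrite lee_fin mulr_ge0 ?mdist_ge0 // ltW.
- by move=> i _ _; rewrite lee_fin mulr_ge0 ?mdist_ge0 // ltW.
apply: lee_nneseries => [i _ _|n _]; first by rewrite lee_fin mulr_ge0 ?mdist_ge0 // ltW.
by rewrite -EFinD lee_fin -mulrDr ler_pM2l // metric_triangle.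
Qed.

Lemma dXund_coord (x y : XX) k : w k * mdist (sval x k) (sval y k) <= dXund x y.
Proof.
rewrite -lee_fin dXundE /wsum.
have := @nneseries_lim_ge R (fun i => (w i * mdist (sval x i) (sval y i))%:E)
  xpredT 0 k.+1.
have h0 : forall n, (0 <= n)%N -> xpredT n ->
    (0 <= (w n * mdist (sval x n) (sval y n))%:E)%E.
  by move=> n _ _; rewrite lee_fin mulr_ge0 ?mdist_ge0 // ltW.
move=> /(_ h0); apply: le_trans.
rewrite big_nat_recr //= leeDr // sume_ge0 // => i _.
by rewrite lee_fin mulr_ge0 ?mdist_ge0 // ltW.
Qed.

Lemma shiftX_in (x : XX) : inXund w xs (shift (sval x)).
Proof.
have g0 : forall k, 0 <= mdist (sval x k) xs by move=> k; exact: mdist_ge0.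
have H := wsum_shift _ g0.
rewrite /inXund; apply: (le_lt_trans H).
by apply: lte_mul_pinfty; [rewrite lee_fin ltW|by []|exact: (svalP x)].
Qed.

Definition shiftX (x : XX) : XX := exist _ (shift (sval x)) (shiftX_in x).

Lemma dXund_shift (x y : XX) : dXund (shiftX x) (shiftX y) <= c * dXund x y.
Proof.
rewrite -lee_fin EFinM !dXundE /=.
by apply: (wsum_shift (fun k => mdist (sval x k) (sval y k))) => k; exact: mdist_ge0.
Qed.

End xund.

Lemma shift_cont (Z : topologicalType) :
  continuous (fun g : {ptws nat -> Z} => (shift g : {ptws nat -> Z})).
Proof.
move=> g.
apply/cvg_sup.
  apply: fmap_filter; exact: nbhs_filter.
move=> i A /=.
rewrite nbhsE => -[B [[C oC <-] Cg] BA].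
have : nbhs g ((fun h : {ptws nat -> Z} => h i.+1) @^-1` C).
  apply: (@proj_continuous nat (fun=> Z) i.+1 g).
  exact: open_nbhs_nbhs.
move=> H; rewrite nbhs_filterE.
have : nbhs g ([eta shift] @^-1` A) by apply: filterS H => h Ch; exact: BA.
by rewrite nbhsE.
Qed.

Section main.
Context {R : realType} {Z : ptopologicalType} {U : topologicalType}
  {X : metricType R}.
Variables (V : {ptws nat -> Z} -> {ptws nat -> U})
  (dU : Uund V -> Uund V -> R) (w : nat -> R) (xs : X) (c : R).
Hypotheses (c0 : 0 < c) (wc : forall k, w k <= c * w k.+1)
  (wpos : forall k, 0 < w k).
Hypothesis TI : time_invariant V.
Hypothesis dUm : is_metric dU.
Hypothesis dUtop : forall A : set (Uund V), metric_open dU A <->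
  exists2 O : set {ptws nat -> U}, open O & A = [set x | O (sval x)].

Local Notation XX := (Xund w xs).
Local Notation sX := (@shiftX R X w xs c c0 wc wpos).
Local Notation dX := (@dXund R X w xs).

Lemma shiftU_in (u : Uund V) : range V (shift (sval u)).
Proof. by case: u => v [z _ vz] /=; exists (shift z); rewrite // TI vz. Qed.

Definition shiftU (u : Uund V) : Uund V := exist _ (shift (sval u)) (shiftU_in u).

Lemma shiftU_Vund z : shiftU (Vund V z) = Vund V (shift z).
Proof. by apply: Prop_irr_exist; rewrite /= TI. Qed.

Definition Tmap (a : XU V w xs) : XU V w xs := (sX a.1, shiftU a.2).

Lemma dU_ge0 u v : 0 <= dU u v. Proof. by case: (dUm u v v). Qed.
Lemma dU_sym u v : dU u v = dU v u. Proof. by case: (dUm u v v) => _ [_ []]. Qed.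
Lemma dU_tri u v y : dU u y <= dU u v + dU v y.
Proof. by case: (dUm u v y) => _ [_ []]. Qed.
Lemma dUxx u : dU u u = 0. Proof. by case: (dUm u u u) => _ [[_ ->]]. Qed.

Lemma dX_ge0 (x y : XX) : 0 <= dX x y.
Proof. exact: (@dXund_ge0 R X w xs wpos). Qed.

Lemma dXU_ge0 (a b : XU V w xs) : 0 <= dXU dU a b.
Proof. by rewrite /dXU addr_ge0 // ?dU_ge0 // dX_ge0. Qed.

Lemma dXU_sym (a b : XU V w xs) : dXU dU a b = dXU dU b a.
Proof. by rewrite /dXU (@dXund_sym R X w xs wpos) dU_sym. Qed.

Lemma dXU_tri (a b y : XU V w xs) : dXU dU a y <= dXU dU a b + dXU dU b y.
Proof.
rewrite /dXU addrACA lerD // ?dU_tri //; exact: (@dXund_tri R X w xs wpos).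
Qed.

Lemma dU_le_dXU (a b : XU V w xs) : dU a.2 b.2 <= dXU dU a b.
Proof. by rewrite /dXU lerDr dX_ge0. Qed.

Lemma dX_le_dXU (a b : XU V w xs) : dX a.1 b.1 <= dXU dU a b.
Proof. by rewrite /dXU lerDl dU_ge0. Qed.

Lemma snd_meas : measurable_fun [set: XUB dU w xs] (snd : XUB dU w xs -> UB dU).
Proof.
apply: open_pres_meas; apply: cont_open_pres => a e e0.
by exists e => // b; apply: le_lt_trans; exact: dU_le_dXU.
Qed.

Lemma shiftX_meas : measurable_fun [set: XB w xs] (sX : XB w xs -> XB w xs).
Proof.
apply: open_pres_meas; apply: cont_open_pres => a e e0.
exists (e / c); first by rewrite divr_gt0.
move=> b h; apply: le_lt_trans (@dXund_shift R X w xs c c0 wc wpos a b) _.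
by rewrite mulrC -ltr_pdivlMr.
Qed.

Lemma shiftU_open B : metric_open dU B -> metric_open dU (shiftU @^-1` B).
Proof.
case/dUtop => O oO ->; apply/dUtop.
exists ((fun g : {ptws nat -> U} => (shift g : {ptws nat -> U})) @^-1` O).
  by move: oO; apply: (proj1 (continuousP _)); exact: shift_cont.
by [].
Qed.

Lemma shiftU_meas : measurable_fun [set: UB dU] (shiftU : UB dU -> UB dU).
Proof. apply: open_pres_meas; exact: shiftU_open. Qed.

Lemma ball_open u e : metric_open dU [set v | dU u v < e].
Proof.
move=> v /= h; exists (e - dU u v); first by rewrite subr_gt0.
move=> y /= hy; apply: le_lt_trans (dU_tri u v y) _; lra.
Qed.

Lemma shiftU_cont a e : 0 < e -> exists2 del, 0 < del &
  forall b, dU a b < del -> dU (shiftU a) (shiftU b) < e.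
Proof.
move=> e0.
have := shiftU_open _ (ball_open (shiftU a) e); move=> /(_ a); rewrite /= dUxx => /(_ e0).
by case=> del del0 H; exists del => // b /H.
Qed.

Lemma Tmap_meas :
  measurable_fun [set: XUB dU w xs] (Tmap : XUB dU w xs -> XUB dU w xs).
Proof.
apply: open_pres_meas; apply: cont_open_pres => a e e0.
have e20 : 0 < e / 2 by rewrite divr_gt0.
have [d2 d20 H2] := shiftU_cont a.2 (e / 2) e20.
have d10 : 0 < e / 2 / c by rewrite divr_gt0.
exists (Num.min (e / 2 / c) d2); first by rewrite lt_min d10 d20.
move=> b; rewrite lt_min => /andP[h1 h2].
have hx : dX a.1 b.1 < e / 2 / c := le_lt_trans (dX_le_dXU a b) h1.
have hu : dU a.2 b.2 < d2 := le_lt_trans (dU_le_dXU a b) h2.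
rewrite /dXU /=.
have := @dXund_shift R X w xs c c0 wc wpos a.1 b.1.
have := H2 _ hu.
rewrite ltr_pdivlMr // in hx.
move=> h3 h4; lra.
Qed.

Lemma shiftZ_meas : measurable_fun [set: @ZB Z] (shift : ZB -> ZB).
Proof.
have := @measurability _ _ (@ZB Z) (@ZB Z) setT shift (@open {ptws nat -> Z}).
move=> /(_ erefl); apply.
move=> _ [B oB <-]; rewrite setTI; apply: sub_sigma_algebra.
by move: oB; apply: (proj1 (continuousP _)); exact: shift_cont.
Qed.


Lemma dXU_rmeas (a0 : XU V w xs) :
  measurable_fun [set: XUB dU w xs] (fun a : XU V w xs => dXU dU a a0).
Proof.
apply: real_meas => a e e0; exists e => // b h.
have t1 := dXU_tri a b a0.
have t2 : dXU dU b a0 <= dXU dU a b + dXU dU a a0.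
  by rewrite (dXU_sym a b); exact: dXU_tri.
by rewrite ltr_norml; apply/andP; split; lra.
Qed.

Lemma dU_rmeas (u0 : Uund V) :
  measurable_fun [set: UB dU] (fun u : Uund V => dU u u0).
Proof.
apply: real_meas => a e e0; exists e => // b h.
have t1 := dU_tri a b u0.
have t2 : dU b u0 <= dU a b + dU a u0 by rewrite (dU_sym a b); exact: dU_tri.
by rewrite ltr_norml; apply/andP; split; lra.
Qed.

Lemma coord_rmeas k : measurable_fun [set: XUB dU w xs]
  (fun a : XU V w xs => mdist (sval a.1 k) xs).
Proof.
apply: real_meas => a e e0; exists (e * w k); first by rewrite mulr_gt0.
move=> b h.
have h1 : w k * mdist (sval a.1 k) (sval b.1 k) < w k * e.
  apply: le_lt_trans (@dXund_coord R X w xs wpos a.1 b.1 k) _.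
  by rewrite mulrC; apply: le_lt_trans (dX_le_dXU a b) h.
rewrite ltr_pM2l // in h1.
have t1 := metric_triangle (sval a.1 k) (sval b.1 k) xs.
have t2 := metric_triangle (sval b.1 k) (sval a.1 k) xs.
rewrite (metric_sym (sval b.1 k) (sval a.1 k)) in t2.
by rewrite ltr_norml; apply/andP; split; lra.
Qed.

Lemma Xund_eq (x y : XX) : sval x = sval y -> x = y.
Proof. exact: Prop_irr_exist. Qed.

Lemma preT_eq (A : set (XU V w xs)) :
  [set a : XU V w xs | exists2 b : XU V w xs, A b &
     sval b.1 = shift (sval a.1) /\ sval b.2 = shift (sval a.2)] =
  Tmap @^-1` A.
Proof.
apply/seteqP; split => a /=.
- case=> b Ab [h1 h2]; suff -> : Tmap a = b by [].
  case: b Ab h1 h2 => b1 b2 /= _ h1 h2.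
  by congr pair; apply: Prop_irr_exist.
- by move=> Ha; exists (Tmap a).
Qed.

Lemma preU_eq (B : set (Uund V)) :
  [set u : Uund V | exists2 b : Uund V, B b & sval b = shift (sval u)] =
  shiftU @^-1` B.
Proof.
apply/seteqP; split => u /=.
- by case=> b Bb h; suff -> : shiftU u = b by []; apply: Prop_irr_exist.
- by move=> Hu; exists (shiftU u).
Qed.


Section main_lemma.
Variables (f : X * U -> X) (p C kappa : R)
  (Xi : probability (UB dU) R) (mu : probability (XUB dU w xs) R).
Hypotheses (p1 : 1 <= p) (Fst : F_standing dU w xs f)
  (inM : in_M w xs f p C kappa Xi) (inS : in_S p Xi mu)
  (Ffix : Fcal_fixed f mu)
  (uniqmu : forall nu : probability (XUB dU w xs) R,
      in_S p Xi nu -> Fcal_fixed f nu ->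
      forall A : set (XUB dU w xs), measurable A -> nu A = mu A)
  (statXi : stationary_U Xi).

Let Tm : {mfun XUB dU w xs >-> XUB dU w xs} :=
  HB.pack (Tmap : XUB dU w xs -> XUB dU w xs)
    (isMeasurableFun.Build _ _ _ _ _ Tmap_meas).
Let Sn : {mfun XUB dU w xs >-> UB dU} :=
  HB.pack (snd : XUB dU w xs -> UB dU)
    (isMeasurableFun.Build _ _ _ _ _ snd_meas).
Let Sh : {mfun UB dU >-> UB dU} :=
  HB.pack (shiftU : UB dU -> UB dU)
    (isMeasurableFun.Build _ _ _ _ _ shiftU_meas).

Let nu := distribution mu Tm.

Lemma nuE A : nu A = mu (Tmap @^-1` A). Proof. by []. Qed.

Lemma mpreT (A : set (XUB dU w xs)) : measurable A ->
  measurable (Tmap @^-1` A : set (XUB dU w xs)).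
Proof. by move=> mA; rewrite -[X in measurable X]setTI; exact: Tmap_meas. Qed.

Lemma mpreU (B : set (UB dU)) : measurable B ->
  measurable (shiftU @^-1` B : set (UB dU)).
Proof. by move=> mB; rewrite -[X in measurable X]setTI; exact: shiftU_meas. Qed.

Lemma statXi' (B : set (UB dU)) : measurable B -> Xi (shiftU @^-1` B) = Xi B.
Proof. by move=> mB; rewrite -preU_eq; exact: statXi. Qed.

Lemma nu_marg : marginal_is Xi nu.
Proof.
move=> B mB; case: inS => marg _ _.
change (mu [set a : XUB dU w xs | (shiftU @^-1` B) a.2] = Xi B).
rewrite marg; [exact: statXi' | exact: mpreU].
Qed.

Lemma nu_fixed : Fcal_fixed f nu.
Proof.
move=> A mA; rewrite /nu /distribution /pushforward.
case: Fst => Fin _.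
apply: (eq_trans _ (Ffix _ (mpreT _ mA))); congr (mu _).
apply/seteqP; split => a /=.
- case=> b Ab [h1 h2].
  pose b' : XU V w xs := (exist _ (Fmap f (sval a.1) (sval a.2)) (Fin a), a.2).
  exists b'; last by split.
  suff -> : Tmap b' = b by [].
  case: b Ab h1 h2 => b1 b2 /= _ h1 h2; congr pair.
  + by apply: Prop_irr_exist; rewrite h1.
  + by rewrite h2.
- case=> b Ab [h1 h2].
  exists (Tmap b) => //; split => /=; first by rewrite h1.
  by rewrite h2.
Qed.

Lemma nu_causal : V_causal nu.
Proof.
case: inS => _ [dO [Om [P [Xr [Zr [mX mZ ind ind2 push]]]]]] _.
exists dO, Om, P, (fun o => sX (Xr o)), (fun o => (shift (Zr o) : {ptws nat -> Z})).
split.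
- exact: (measurableT_comp shiftX_meas mX).
- exact: (measurableT_comp shiftZ_meas mZ).
- move=> s E us hE.
  have := ind (map S s) (fun j => E j.-1).
  rewrite map_inj_uniq //; last exact: succn_inj.
  have hE' : forall i, i \in map S s ->
      sigma_of (fun o => Zr o i) (@borel_sets Z) (E i.-1).
    by move=> j /mapP [i si ->] /=; exact: hE i si.
  by move=> /(_ us hE'); rewrite !big_map.
- move=> n n0 A B hA hB.
  apply: (ind2 n.+1 isT).
  + move: hA; apply: sub_smallest2r; first exact: smallest_sigma_algebra.
    move=> Y [m /= nm HY].
    by exists m.+1.
  + move: hB; apply: sub_smallest2r; first exact: smallest_sigma_algebra.
    move=> Y [m /= nm HY].
    by exists m.+1.
- move=> A mA; apply: (eq_trans _ (push _ (mpreT _ mA))); rewrite /pushforward.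
  congr (P _); apply/seteqP; split => o /=.
  + by rewrite /Tmap /= shiftU_Vund.
  + by rewrite /Tmap /= shiftU_Vund.
Qed.


Lemma hY (u0 : Uund V) :
  (\int[mu]_a ((dU (shiftU a.2) u0) `^ p)%:E =
  \int[Xi]_u ((dU u u0) `^ p)%:E)%E.
Proof.
case: inS => marg _ _.
pose h := fun u : UB dU => (((dU (shiftU u) u0) `^ p)%:E : \bar R).
have mh : measurable_fun setT h.
  apply: pow_meas; exact: (measurableT_comp (dU_rmeas u0) shiftU_meas).
transitivity (\int[distribution mu Sn]_u h u)%E.
  by rewrite ge0_integral_distribution // => u; rewrite lee_fin powR_ge0.
transitivity (\int[Xi]_u h u)%E.
  by apply: eq_measure_integral => A mA _; exact: marg.
transitivity (\int[distribution Xi Sh]_u ((dU u u0) `^ p)%:E)%E.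
  rewrite ge0_integral_distribution // => [|u]; last by rewrite lee_fin powR_ge0.
  apply: pow_meas; exact: dU_rmeas.
by apply: eq_measure_integral => A mA _; exact: statXi'.
Qed.

Lemma nu_Ppw : in_Ppw p nu.
Proof.
case: inS => _ _ [[a0' ha0'] hsum].
case: inM => _ [u0 hu0] _.
have p0 : 0 <= p by apply: le_trans p1.
split.
- pose b0 : XUB dU w xs := (sX a0'.1, u0).
  exists b0.
  rewrite /nu ge0_integral_distribution //; last 2 first.
  + apply: pow_meas; exact: dXU_rmeas.
  + by move=> y; rewrite lee_fin powR_ge0.
  have mD : measurable_fun setT
      (fun a : XUB dU w xs => (((dXU dU a a0') `^ p)%:E : \bar R)).
    apply: pow_meas; exact: dXU_rmeas.
  have mY : measurable_fun setT
      (fun a : XUB dU w xs => (((dU (shiftU a.2) u0) `^ p)%:E : \bar R)).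
    apply: pow_meas.
    exact: (measurableT_comp (dU_rmeas u0) (measurableT_comp shiftU_meas snd_meas)).
  apply: (@le_lt_trans _ _ (\int[mu]_a
      ((2 `^ p * c `^ p)%R%:E * ((dXU dU a a0') `^ p)%:E +
       (2 `^ p)%:E * ((dU (shiftU a.2) u0) `^ p)%:E))%E).
    apply: ge0_le_integral => //.
    + by move=> a _; rewrite lee_fin powR_ge0.
    + apply: measurableT_comp; last exact: Tmap_meas.
      apply: pow_meas; exact: dXU_rmeas.
    + by apply: emeasurable_funD; apply: measurable_funeM.
    + move=> a _ /=; rewrite -!EFinM -EFinD lee_fin.
      have hx : dX (sX a.1) (sX a0'.1) <= c * dXU dU a a0'.
        apply: le_trans (@dXund_shift R X w xs c c0 wc wpos a.1 a0'.1) _.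
        by rewrite ler_pM2l // dX_le_dXU.
      have hD : 0 <= dXU dU a a0' by exact: dXU_ge0.
      have hU : 0 <= dU (shiftU a.2) u0 by exact: dU_ge0.
      apply: (@le_trans _ _ ((c * dXU dU a a0' + dU (shiftU a.2) u0) `^ p)).
        apply: ge0_ler_powR => //.
        * by rewrite nnegrE /dXU addr_ge0 // ?dX_ge0 // dU_ge0.
        * by rewrite nnegrE addr_ge0 // mulr_ge0 // ltW.
        * by rewrite /dXU /= lerD.
      have := @pow_add_le R (c * dXU dU a a0') (dU (shiftU a.2) u0) p
        (mulr_ge0 (ltW c0) hD) hU p0.
      move=> H.
      apply: (le_trans H).
      rewrite (@powRM _ c (dXU dU a a0') p (ltW c0) hD); lra.
  rewrite ge0_integralD //; last 4 first.
  + by move=> a _; rewrite -EFinM lee_fin mulr_ge0 ?mulr_ge0 ?powR_ge0.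
  + exact: measurable_funeM.
  + by move=> a _; rewrite -EFinM lee_fin mulr_ge0 ?mulr_ge0 ?powR_ge0.
  + exact: measurable_funeM.
  rewrite !ge0_integralZl_EFin //; try by move=> a _; rewrite lee_fin powR_ge0.
  all: try by rewrite mulr_ge0 ?powR_ge0.
  all: try exact: powR_ge0.
  apply: lte_add_pinfty.
  + apply: lte_mul_pinfty; [by rewrite lee_fin mulr_ge0 ?powR_ge0|by []|exact: ha0'].
  + apply: lte_mul_pinfty; [by rewrite lee_fin powR_ge0|by []|by rewrite hY].
- pose I := fun k => (\int[mu]_a ((mdist (sval a.1 k) xs) `^ p)%:E)%E.
  have I0 k : (0 <= I k)%E by apply: integral_ge0 => a _; rewrite lee_fin powR_ge0.
  have E k : (\int[nu]_a ((mdist (sval a.1 k) xs) `^ p)%:E = I k.+1)%E.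
    rewrite /nu ge0_integral_distribution //; last 2 first.
    + apply: pow_meas; exact: coord_rmeas.
    + by move=> y; rewrite lee_fin powR_ge0.
  under eq_eseriesr do rewrite E.
  apply: le_lt_trans (@eshift_le R w c c0 wc wpos I I0) _.
  by apply: lte_mul_pinfty => //; rewrite lee_fin ltW.
Qed.

Lemma main_stat : stationary_XU mu.
Proof.
move=> A mA; rewrite preT_eq.
exact: (uniqmu nu (And3 nu_marg nu_causal nu_Ppw) nu_fixed _ mA).
Qed.

End main_lemma.
End main.

Theorem lemmaB4 (R : realType) (Z : ptopologicalType) (U : topologicalType)
  (X : metricType R) (f : X * U -> X)
  (V : {ptws nat -> Z} -> {ptws nat -> U}) (dU : Uund V -> Uund V -> R)
  (w : nat -> R) (xs : X) (p C kappa : R)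
  (Xi : probability (UB dU) R) (mu : probability (XUB dU w xs) R) :
  (* standing assumptions *)
  1 <= p ->
  polish_space R Z -> polish_space R U ->
  metric_complete (@mdist R X) -> metric_separable (@mdist R X) ->
  continuous f -> continuous V -> causal_map V ->
  polish_subspace R (range V) -> induces_subspace_topology dU ->
  weight_seq w -> (wnorm w < +oo)%E ->
  F_standing dU w xs f ->
  (* hypotheses of the lemma *)
  time_invariant V ->
  0 < C -> 0 < kappa -> (kappa%:E * wnorm w < (2 `^ (1 - p))%:E)%E ->
  in_M w xs f p C kappa Xi ->
  (* mu is the unique fixed point of calF_* in P^Xi /\ P^{V-causal} /\ P_p^w *)
  in_S p Xi mu -> Fcal_fixed f mu ->
  (forall nu : probability (XUB dU w xs) R,
      in_S p Xi nu -> Fcal_fixed f nu ->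
      forall A : set (XUB dU w xs), measurable A -> nu A = mu A) ->
  stationary_U Xi ->
  stationary_XU mu.
Proof.
move=> p1 _ _ _ _ _ _ _ _ [dUm dUtop] wseq wfin Fst TI _ _ _ inM inS Ffix
  uniqmu statXi.
have [c [c0 wc]] := wshift_bound _ _ wseq wfin.
have wpos : forall k, 0 < w k.
  by case: wseq => w01 _ _ k; case/andP: (w01 k).
exact: (@main_stat R Z U X V dU w xs c c0 wc wpos TI dUm dUtop f p C kappa
  Xi mu p1 Fst inM inS Ffix uniqmu statXi).
Qed.
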